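(* Place the almost positive roots of type $C_n$ in the off-diagonal entries of an $(n+1)\times(n+1)$ array via: entry $(1,j)$ ($2\le j\le n+1$) is $-\alpha_{j-1}$; entry $(i,j)$ with $2\le i<j$ is $\varepsilon_{i-1}-\varepsilon_{j-1}$; entry $(i,j)$ with $i>j$ is $\varepsilon_j+\varepsilon_{i-1}$. For any pairwise distinct $i,j,k\in[1,n+1]$, the almost positive roots in the $(i,j)$- and $(j,k)$-entries are not $\underline c$-compatible.
   Context: Type $C_n$: standard basis $\varepsilon_i$ of $\mathbb{R}^n$, simple roots $\alpha_i=\varepsilon_i-\varepsilon_{i+1}$ ($i<n$), $\alpha_n=2\varepsilon_n$, $\Pi$ the simple roots, $\Phi_+=\{\varepsilon_i\pm\varepsilon_j:i<j\}\cup\{2\varepsilon_i\}$, $\Phi_{\ge-1}=\Phi_+\sqcup(-\Pi)$. With simple reflections $s_i$ and $c=s_1\cdots s_n$, $\tau:\Phi_{\ge-1}\to\Phi_{\ge-1}$ is $\tau(-\alpha_i)=s_1\cdots s_{i-1}(\alpha_i)$, $\tau(s_n\cdots s_{i+1}(\alpha_i))=-\alpha_i$, $\tau(\alpha)=c(\alpha)$ otherwise. The $\underline c$-compatibility degree is the unique $\tau$-invariant function $\Phi_{\ge-1}^2\to\mathbb{Z}$ with $(-\alpha\|_{\underline c}-\alpha')=0$ for $\alpha,\alpha'\in\Pi$ and $(-\alpha\|_{\underline c}\beta)=[\beta:\alpha]$ (coefficient of $\alpha$ in $\beta$) for $\alpha\in\Pi,\beta\in\Phi_+$; two roots are $\underline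 c$-compatible if their degree is $0$. *)

(* Defs.v *)
(* Type C_n root system realized in Z^n = {ffun 'I_n -> int}.
   Coordinates are 0-indexed: coordinate k (0 <= k < n) is epsilon_{k+1}. *)
From HB Require Import structures.
From mathcomp Require Import all_boot all_order all_algebra.
Set Implicit Arguments. Unset Strict Implicit. Unset Printing Implicit Defensive.
Import Order.TTheory GRing.Theory Num.Theory.
Local Open Scope ring_scope.

Definition vec (n : nat) := {ffun 'I_n -> int}.

(* coordinate k of v (0 if k >= n) *)
Definition coord n (v : vec n) (k : nat) : int :=
  match @insub _ (fun j => j < n)%N 'I_n k with Some j => v j | None => 0 end.

Definition eps n (k : nat) : vec n := [ffun j : 'I_n => ((val j == k) : nat)%:Z].

Definition alpha n (k : nat) : vec n :=
  if (k.+1 < n)%N then eps n k - eps n k.+1 else eps n k *+ 2.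

Definition sref n (k : nat) (v : vec n) : vec n :=
  [ffun j : 'I_n =>
     if (k.+1 < n)%N then
       (if val j == k then coord v k.+1 else if val j == k.+1 then coord v k else v j)
     else if val j == k then - v j else v j].

Definition sprod n (l : seq nat) (v : vec n) : vec n := foldr (@sref n) v l.

Definition cox n (v : vec n) : vec n := sprod (iota 0 n) v.

Definition pos_root n (v : vec n) : bool :=
  [exists i : 'I_n, exists j : 'I_n,
     (i < j)%N && ((v == eps n i - eps n j) || (v == eps n i + eps n j))]
  || [exists i : 'I_n, v == eps n i *+ 2].

Definition neg_simple n (v : vec n) : bool := [exists i : 'I_n, v == - alpha n i].

Definition almost_pos n (v : vec n) : bool := pos_root v || neg_simple v.

Definition tau n (v : vec n) : vec n :=
  match [pick i : 'I_n | v == - alpha n i] with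
  | Some i => sprod (iota 0 i) (alpha n i)
  | None =>
    match [pick i : 'I_n | v == sprod (rev (iota i.+1 (n - i.+1))) (alpha n i)] with
    | Some i => - alpha n i
    | None => cox v
    end
  end.

(* f is the c-compatibility degree of type C_n: it is tau-invariant on
   Phi_{>=-1}^2, vanishes on pairs of negative simple roots, and
   (-alpha_i || beta) is the coefficient of alpha_i in beta for beta positive. *)
Definition is_compat_degree n (f : vec n -> vec n -> int) : Prop :=
  [/\ (forall a b, almost_pos a -> almost_pos b -> f (tau a) (tau b) = f a b),
      (forall i j : 'I_n, f (- alpha n i) (- alpha n j) = 0)
    & (forall (i : 'I_n) (b : vec n) (c : {ffun 'I_n -> int}),
         pos_root b -> b = \sum_(j < n) alpha n j *~ c j ->
         f (- alpha n i) b = c i)].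

(* the (n+1)x(n+1) array, 1-indexed entries (i,j), i <> j *)
Definition entry n (i j : nat) : vec n :=
  if i == 1%N then - alpha n (j - 2)
  else if (i < j)%N then eps n (i - 2) - eps n (j - 2)
  else eps n (j - 1) + eps n (i - 2).

(* Main.v *)
Require Import Defs.
From mathcomp Require Import all_boot all_order all_algebra zify.
Import Order.TTheory GRing.Theory Num.Theory.
Set Implicit Arguments. Unset Strict Implicit. Unset Printing Implicit Defensive.
Local Open Scope ring_scope.

Lemma coord_lt n (v : vec n) k (h : (k < n)%N) : Defs.coord v k = v (Ordinal h).
Proof. by rewrite /Defs.coord insubT /=; congr (v _); apply: val_inj. Qed.

Lemma coord_ge n (v : vec n) k : ~~ (k < n)%N -> Defs.coord v k = 0.
Proof. by move=> h; rewrite /Defs.coord insubN. Qed.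

Ltac eqcase := repeat match goal with
  | |- context [?a == ?b] => let E := fresh "E" in case: (a =P b) => E
  | H : context [?a == ?b] |- _ => revert H; case: (a =P b); intros
  end; try lia.

Definition swp (k a : nat) : nat := if a == k then k.+1 else if a == k.+1 then k else a.

Lemma sref_eps n k a : (k.+1 < n)%N -> sref k (eps n a) = eps n (swp k a).
Proof.
move=> hk; apply/ffunP=> x; rewrite !ffunE hk.
rewrite (coord_lt _ hk) (coord_lt _ (ltnW hk)) !ffunE /= /swp.
by eqcase.
Qed.

Lemma sref_eps_last n k a : ~~ (k.+1 < n)%N ->
  sref k (eps n a) = if a == k then - eps n a else eps n a.
Proof.
move=> hk; apply/ffunP=> x; rewrite !ffunE (negbTE hk).
by case: ifP; case: ifP; rewrite ?ffunE //; eqcase.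
Qed.

Lemma coordD n (u v : vec n) k : Defs.coord (u + v) k = Defs.coord u k + Defs.coord v k.
Proof. by rewrite /Defs.coord; case: insubP => // *; rewrite ffunE. Qed.

Lemma coordN n (u : vec n) k : Defs.coord (- u) k = - Defs.coord u k.
Proof. by rewrite /Defs.coord; case: insubP => // *; rewrite ffunE. Qed.

Lemma srefD n k (u v : vec n) : sref k (u + v) = sref k u + sref k v.
Proof.
apply/ffunP=> x; rewrite !ffunE !coordD.
by case: ifP => _; [case: ifP => _; [|case: ifP => _] | case: ifP => _]; rewrite ?ffunE // opprD.
Qed.

Lemma srefN n k (u : vec n) : sref k (- u) = - sref k u.
Proof.
apply/ffunP=> x; rewrite !ffunE !coordN.
by case: ifP => _; [case: ifP => _; [|case: ifP => _] | case: ifP => _]; rewrite ?ffunE.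
Qed.

Lemma sprodD n s (u v : vec n) : sprod s (u + v) = sprod s u + sprod s v.
Proof. by elim: s => //= k s IH; rewrite IH srefD. Qed.

Lemma sprodN n s (u : vec n) : sprod s (- u) = - sprod s u.
Proof. by elim: s => //= k s IH; rewrite IH srefN. Qed.

Lemma sprodB n s (u v : vec n) : sprod s (u - v) = sprod s u - sprod s v.
Proof. by rewrite sprodD sprodN. Qed.

Lemma sprod_cat n s t (v : vec n) : sprod (s ++ t) v = sprod s (sprod t v).
Proof. by rewrite /sprod foldr_cat. Qed.

Lemma sprod_fix n s a :
  all (fun k => (k.+1 < n)%N && (a != k) && (a != k.+1)) s -> sprod s (eps n a) = eps n a.
Proof.
elim: s => //= k s IH /andP[/andP[/andP[hk h1] h2] hs].
by rewrite IH // sref_eps // /swp (negbTE h1) (negbTE h2).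
Qed.

Lemma sprod_first n l : (l < n)%N -> sprod (iota 0 l) (eps n l) = eps n 0.
Proof.
elim: l => [//|l IH] h.
rewrite -addn1 iotaD sprod_cat /= sref_eps // /swp.
rewrite addn1 eqxx ifN; last by rewrite eqn_leq ltnn.
exact: IH (ltnW h).
Qed.

Lemma cox_eps n a : (a.+1 < n)%N -> cox (eps n a) = eps n a.+1.
Proof.
move=> ha; rewrite /cox.
rewrite [X in iota 0 X](_ : n = (a + (n - a.+2).+1) + 1)%N; last by lia.
rewrite iotaD sprod_cat /= add0n.
rewrite sref_eps_last; last by lia.
rewrite ifN; last by apply/eqP; lia.
rewrite iotaD sprod_cat /= add0n.
rewrite sprod_fix; last first.
  apply/allP=> k; rewrite mem_iota => hk; apply/andP; split; [apply/andP; split|]; apply/eqP || idtac; lia.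
rewrite sref_eps; last by lia.
rewrite /swp eqxx sprod_fix //.
apply/allP=> k; rewrite mem_iota => hk; apply/andP; split; [apply/andP; split|]; apply/eqP || idtac; lia.
Qed.

Lemma cox_eps_last n : (0 < n)%N -> cox (eps n n.-1) = - eps n 0.
Proof.
move=> hn; rewrite /cox.
rewrite [X in iota 0 X](_ : n = n.-1 + 1)%N; last by lia.
rewrite iotaD sprod_cat /= add0n.
rewrite sref_eps_last; last by lia.
by rewrite eqxx sprodN sprod_first //; lia.
Qed.

Lemma cox_D n (u v : vec n) : cox (u + v) = cox u + cox v.
Proof. exact: sprodD. Qed.
Lemma cox_B n (u v : vec n) : cox (u - v) = cox u - cox v.
Proof. exact: sprodB. Qed.

Lemma rev_iotaS b m : rev (iota b m.+1) = (b + m)%N :: rev (iota b m).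
Proof. by rewrite -addn1 iotaD rev_cat. Qed.

Lemma sprod_shift n b m : (b + m < n)%N -> sprod (rev (iota b m)) (eps n b) = eps n (b + m).
Proof.
elim: m => [|m IH] h; first by rewrite addn0.
rewrite rev_iotaS /= IH; last by lia.
rewrite sref_eps; last by lia.
by rewrite /swp eqxx addnS.
Qed.

Lemma alpha_lt n i : (i.+1 < n)%N -> alpha n i = eps n i - eps n i.+1.
Proof. by move=> h; rewrite /alpha h. Qed.

Lemma alpha_last n i : ~~ (i.+1 < n)%N -> alpha n i = eps n i *+ 2.
Proof. by move=> h; rewrite /alpha (negbTE h). Qed.

Lemma special_eq n (i : 'I_n) :
  sprod (rev (iota i.+1 (n - i.+1))) (alpha n i) = eps n i + eps n n.-1.
Proof.
case: (ltnP i.+1 n) => h.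
  rewrite alpha_lt // (_ : (n - i.+1) = (n - i.+2).+1)%N; last by lia.
  rewrite rev_iotaS /= sprodB sprod_fix; last first.
    apply/allP=> k; rewrite mem_rev mem_iota => hk.
    apply/andP; split; [apply/andP; split|]; apply/eqP || idtac; lia.
  rewrite sprod_shift; last by lia.
  rewrite (_ : (i.+1 + (n - i.+2))%N = n.-1); last by lia.
  rewrite srefD srefN !sref_eps_last; try lia.
  rewrite eqxx ifN ?opprK //; apply/eqP; lia.
rewrite alpha_last; last by rewrite -leqNgt.
rewrite (_ : (n - i.+1) = 0)%N; last by lia.
by rewrite /= mulr2n (_ : n.-1 = i) //; have := ltn_ord i; lia.
Qed.

Lemma alpha_inj n (i j : 'I_n) : alpha n i = alpha n j -> i = j.
Proof.
move=> /(congr1 (fun v : vec n => v i)) h; apply/val_inj/eqP/negPn/negP => hij.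
move: h; rewrite /alpha; case: ifP => h1; case: ifP => h2; rewrite !ffunE ?mulr2n ?ffunE /=. 
all: move/eqP: hij => hij; change (nat_of_ord i <> nat_of_ord j) in hij; eqcase. Qed.

Lemma eps_inj n (i j : 'I_n) : eps n i = eps n j -> i = j.
Proof.
move=> /(congr1 (fun v : vec n => v i)); rewrite !ffunE eqxx => h; apply/val_inj.
by move: h; eqcase.
Qed.

Lemma tau_neg n (i : 'I_n) : tau (- alpha n i) = sprod (iota 0 i) (alpha n i).
Proof.
rewrite /tau; case: pickP => [j /eqP /oppr_inj /alpha_inj -> //|/(_ i)].
by rewrite eqxx.
Qed.

Lemma tau_spec n (v : vec n) (l : 'I_n) :
  (forall i : 'I_n, v != - alpha n i) -> v = eps n l + eps n n.-1 -> tau v = - alpha n l.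
Proof.
move=> H hv; rewrite /tau; case: pickP => [i hi|_]; first by rewrite (negbTE (H i)) in hi.
case: pickP => [i /eqP|/(_ l)]; last by rewrite special_eq -hv eqxx.
by rewrite special_eq hv => /addIr /eps_inj ->.
Qed.

Lemma tau_cox n (v : vec n) :
  (forall i : 'I_n, v != - alpha n i) -> (forall i : 'I_n, v != eps n i + eps n n.-1) ->
  tau v = cox v.
Proof.
move=> H1 H2; rewrite /tau; case: pickP => [i hi|_]; first by rewrite (negbTE (H1 i)) in hi.
case: pickP => [i|//]; by rewrite special_eq (negbTE (H2 i)).
Qed.

Lemma alpha_at n (i : 'I_n) : 0 < alpha n i i.
Proof. by rewrite /alpha; case: ifP => _; rewrite !ffunE ?mulr2n ?ffunE /= eqxx; eqcase. Qed.

Lemma nonneg_not_neg n (v : vec n) : (forall x, 0 <= v x) -> forall i : 'I_n, v != - alpha n i.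
Proof.
move=> H i; apply/eqP => hv; have := H i; have := alpha_at i; rewrite hv ffunE oppr_ge0 leNgt => -> //.
Qed.

Lemma diff_not_neg n a b (i : 'I_n) : (a < b < n)%N -> eps n a - eps n b != - alpha n i.
Proof.
move=> /andP[hab hb]; apply/eqP => hv.
have := congr1 (fun v : vec n => v i) hv.
move: hv; rewrite /alpha; case: ifP => h.
  move=> /(congr1 (fun v : vec n => v (Ordinal h))).
  rewrite !ffunE /=; eqcase.
by move=> _; rewrite !ffunE /= ?mulr2n ?ffunE /=; eqcase.
Qed.

Lemma diff_not_spec n a b (i : 'I_n) : (a < b < n)%N -> eps n a - eps n b != eps n i + eps n n.-1.
Proof.
move=> /andP[hab hb]; apply/eqP => /(congr1 (fun v : vec n => v (Ordinal hb))).
rewrite !ffunE /=; eqcase.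
Qed.

Lemma sum_not_spec n a b (i : 'I_n) : (a < n.-1)%N -> (b < n.-1)%N ->
  eps n a + eps n b != eps n i + eps n n.-1.
Proof.
move=> ha hb; have hn : (n.-1 < n)%N by lia.
apply/eqP => /(congr1 (fun v : vec n => v (Ordinal hn))).
rewrite !ffunE /=; eqcase.
Qed.

Lemma sum_not_neg n a b (i : 'I_n) : eps n a + eps n b != - alpha n i.
Proof. by apply: nonneg_not_neg => x; rewrite !ffunE. Qed.

Definition rot n (i : nat) : nat := if i == n.+1 then 1%N else i.+1.

Ltac decide_ifs := repeat match goal with
  | |- context [if ?b then _ else _] =>
      lazymatch b with context [if _ then _ else _] => fail | _ => idtac end;
      (rewrite (_ : b = true); last by lia) || (rewrite (_ : b = false); last by lia)
  end.

Lemma sprod_neg_val n l : (l.+1 < n)%N ->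
  sprod (iota 0 l) (alpha n l) = eps n 0 - eps n l.+1.
Proof.
move=> h; rewrite alpha_lt // sprodB sprod_first; last by lia.
rewrite sprod_fix //; apply/allP=> k; rewrite mem_iota => hk.
apply/andP; split; [apply/andP; split|]; apply/eqP || idtac; lia.
Qed.

Lemma sprod_neg_last n : (0 < n)%N ->
  sprod (iota 0 n.-1) (alpha n n.-1) = eps n 0 + eps n 0.
Proof.
move=> h; rewrite alpha_last; last by lia.
by rewrite mulr2n sprodD sprod_first //; lia.
Qed.

Lemma tau_entry n i j : (1 <= i <= n.+1)%N -> (1 <= j <= n.+1)%N -> i != j ->
  tau (entry n i j) = entry n (rot n i) (rot n j).
Proof.
move=> /andP[hi1 hi2] /andP[hj1 hj2] /eqP hij.
rewrite /entry /rot.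
case: (i =P 1%N) => [hi | hi].
  subst i; have hl : (j - 2 < n)%N by lia.
  rewrite (_ : j - 2 = Ordinal hl)%N // tau_neg /=.
  case: (j =P n.+1) => [hj|hj].
    rewrite (_ : j - 2 = n.-1)%N; last by lia.
    rewrite sprod_neg_last; last by lia.
    by decide_ifs.
  decide_ifs.
  rewrite sprod_neg_val; last by lia.
  by congr (eps n _ - eps n _); lia.
case: (ltnP i j) => hij2.
  have hab : (i - 2 < j - 2 < n)%N by lia.
  rewrite tau_cox; last first.
  - by move=> l; apply: diff_not_spec.
  - by move=> l; apply: diff_not_neg.
  rewrite cox_B.
  case: (j =P n.+1) => [hj|hj].
    rewrite (_ : j - 2 = n.-1)%N; last by lia.
    rewrite cox_eps_last; last by lia.
    rewrite cox_eps; last by lia.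
    decide_ifs.
    rewrite opprK addrC.
    by congr (eps n _ + eps n _); lia.
  rewrite !cox_eps; try lia.
  decide_ifs.
  by congr (eps n _ - eps n _); lia.
case: (i =P n.+1) => [hi'|hi'].
  have hl : (j - 1 < n)%N by lia.
  rewrite (tau_spec (l := Ordinal hl)); last first.
  - by rewrite hi' /=; congr (eps n _ + eps n _); lia.
  - by move=> l; apply: sum_not_neg.
  decide_ifs.
  by congr (- alpha n _); lia.
rewrite tau_cox; last first.
- by move=> l; apply: sum_not_spec; lia.
- by move=> l; apply: sum_not_neg.
rewrite cox_D !cox_eps; try lia.
decide_ifs.
by congr (eps n _ + eps n _); lia.
Qed.

Lemma pos_diff n a b : (a < b < n)%N -> pos_root (eps n a - eps n b).
Proof.
move=> /andP[hab hb]; have ha : (a < n)%N by lia.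
apply/orP; left; apply/existsP; exists (Ordinal ha); apply/existsP; exists (Ordinal hb).
by rewrite /= hab eqxx.
Qed.

Lemma pos_sum n a b : (a <= b < n)%N -> pos_root (eps n a + eps n b).
Proof.
move=> /andP[hab hb]; have ha : (a < n)%N by lia.
case: (ltnP a b) => h.
  apply/orP; left; apply/existsP; exists (Ordinal ha); apply/existsP; exists (Ordinal hb).
  by rewrite /= h eqxx orbT.
have -> : b = a by lia.
by apply/orP; right; apply/existsP; exists (Ordinal ha); rewrite /= mulr2n.
Qed.

Lemma pos_entry n j k : (2 <= j <= n.+1)%N -> (1 <= k <= n.+1)%N -> j != k ->
  pos_root (entry n j k).
Proof.
move=> /andP[hj1 hj2] /andP[hk1 hk2] /eqP hjk; rewrite /entry.
rewrite ifN; last by apply/eqP; lia.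
case: ltnP => h; first by apply: pos_diff; lia.
by apply: pos_sum; lia.
Qed.

Lemma ap_entry n i j : (1 <= i <= n.+1)%N -> (1 <= j <= n.+1)%N -> i != j ->
  almost_pos (entry n i j).
Proof.
move=> /andP[hi1 hi2] /andP[hj1 hj2] /eqP hij.
case: (i =P 1%N) => [hi|hi].
  subst i; have hl : (j - 2 < n)%N by lia.
  apply/orP; right; apply/existsP; exists (Ordinal hl).
  by rewrite /entry eqxx.
by apply/orP; left; apply: pos_entry; try (apply/eqP; lia); apply/andP; split; lia.
Qed.

Lemma rot_range n i : (1 <= i <= n.+1)%N -> (1 <= rot n i <= n.+1)%N.
Proof. by rewrite /rot; eqcase. Qed.

Lemma rot_neq n i j : (1 <= i <= n.+1)%N -> (1 <= j <= n.+1)%N -> i != j -> rot n i != rot n j.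
Proof. by rewrite /rot; move=> ? ? /eqP ?; apply/eqP; eqcase. Qed.

Ltac boolcase := repeat match goal with
  | |- context [(?a <= ?b)%N] => case: (leqP a b) => ?
  | |- context [(?a == ?b :> nat)] => case: (a =P b) => ?
  end.

Lemma sum_single n b (hb : (b < n)%N) :
  \sum_(l < n) alpha n l *~ ((val l == b) : nat)%:Z = alpha n b.
Proof.
rewrite (bigD1 (Ordinal hb)) //= eqxx mulr1z big1 ?addr0 // => l hl.
rewrite (_ : (val l == b) = false) ?mulr0z //.
apply/eqP => e; move/eqP: hl; apply; exact: val_inj.
Qed.

Lemma tele n a b : (a <= b < n)%N ->
  \sum_(l < n) alpha n l *~ (((a <= l) && (l < b))%N : nat)%:Z = eps n a - eps n b.
Proof.
elim: b => [|b IH] /andP[hab hb].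
  have -> : a = 0%N by lia.
  rewrite subrr; apply: big1 => l _.
  by rewrite ltn0 andbF mulr0z.
case: (a =P b.+1) => [ea|ea].
  rewrite ea subrr; apply: big1 => l _.
  rewrite (_ : ((b.+1 <= l) && (l < b.+1))%N = false); first by rewrite mulr0z.
  by case: leqP => //= h; rewrite ltnNge h.
rewrite (eq_bigr (fun l : 'I_n => alpha n l *~ (((a <= l) && (l < b))%N : nat)%:Z
                   + alpha n l *~ ((val l == b) : nat)%:Z)); last first.
  move=> l _; rewrite -mulrzDr; congr (_ *~ _).
  rewrite /= ltnS; case: (leqP a l) => h1 /=; case: (ltngtP l b) => h2 //=.
  by exfalso; lia.
rewrite big_split /= IH; last by lia.
rewrite sum_single; last by lia.
rewrite alpha_lt //.
by rewrite addrA subrK.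
Qed.

Lemma base n (f : vec n -> vec n -> int) : is_compat_degree f ->
  forall j k, (2 <= j <= n.+1)%N -> (2 <= k <= n.+1)%N -> j != k ->
  f (entry n 1 j) (entry n j k) != 0.
Proof.
case=> _ _ H3 j k /andP[hj1 hj2] /andP[hk1 hk2] /eqP hjk.
have hl : (j - 2 < n)%N by lia.
have hpos : pos_root (entry n j k).
  by apply: pos_entry; try (apply/eqP; lia); apply/andP; split; lia.
rewrite {1}/entry eqxx (_ : j - 2 = Ordinal hl)%N //.
case: (ltnP j k) => hjk2.
  pose c := [ffun l : 'I_n => ((((j - 2) <= l) && (l < k - 2))%N : nat)%:Z].
  rewrite (H3 (Ordinal hl) _ c hpos).
    by rewrite ffunE /= leqnn /=; case: ltnP => //; lia.
  rewrite /entry ifN; last by apply/eqP; lia.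
  rewrite hjk2 -tele; last by lia.
  by apply: eq_bigr => l _; rewrite ffunE.
pose c := [ffun l : 'I_n => ((((k - 1) <= l) && (l < n.-1))%N : nat)%:Z
                         + ((((j - 2) <= l) && (l < n.-1))%N : nat)%:Z
                         + ((val l == n.-1) : nat)%:Z].
rewrite (H3 (Ordinal hl) _ c hpos).
  rewrite ffunE /= leqnn /=.
  case: (ltnP (j - 2) n.-1) => h1; first by rewrite andbT; case: leqP.
  rewrite (_ : (j - 2)%N == n.-1); first by rewrite !andbF.
  by apply/eqP; lia.
rewrite /entry ifN; last by apply/eqP; lia.
rewrite ltnNge hjk2 /=.
apply: esym.
rewrite (eq_bigr (fun l : 'I_n =>
    alpha n l *~ ((((k - 1) <= l) && (l < n.-1))%N : nat)%:Z
  + alpha n l *~ ((((j - 2) <= l) && (l < n.-1))%N : nat)%:Z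
  + alpha n l *~ ((val l == n.-1) : nat)%:Z)); last first.
  by move=> l _; rewrite ffunE !mulrzDr.
rewrite !big_split /= !tele; try lia.
rewrite sum_single; last by lia.
rewrite alpha_last; last by lia.
by rewrite mulr2n addrACA !subrK.
Qed.

Lemma step n (f : vec n -> vec n -> int) : is_compat_degree f ->
  forall i j k, (1 <= i <= n.+1)%N -> (1 <= j <= n.+1)%N -> (1 <= k <= n.+1)%N ->
  i != j -> j != k ->
  f (entry n i j) (entry n j k) = f (entry n (rot n i) (rot n j)) (entry n (rot n j) (rot n k)).
Proof.
case=> H1 _ _ i j k hi hj hk hij hjk.
rewrite -(H1 (entry n i j) (entry n j k)) ?ap_entry //.
by rewrite !tau_entry.
Qed.

Unset Implicit Arguments.
Theorem lemma4p8 (n : nat) (f : vec n -> vec n -> int) :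
  is_compat_degree f ->
  forall i j k : nat,
    (1 <= i <= n.+1)%N -> (1 <= j <= n.+1)%N -> (1 <= k <= n.+1)%N ->
    i != j -> j != k -> i != k ->
    f (entry n i j) (entry n j k) != 0.
Proof.
move=> H.
have B : forall j k, (1 <= j <= n.+1)%N -> (1 <= k <= n.+1)%N ->
    1%N != j -> j != k -> 1%N != k -> f (entry n 1 j) (entry n j k) != 0.
  move=> j k /andP[? ?] /andP[? ?] /eqP ? hjk /eqP ?.
  by apply: base => //; apply/andP; split; lia.
have M : forall m i j k, (i + m = n.+1)%N -> (2 <= i)%N ->
    (1 <= j <= n.+1)%N -> (1 <= k <= n.+1)%N ->
    i != j -> j != k -> i != k -> f (entry n i j) (entry n j k) != 0.
  elim=> [|m IH] i j k him hi2 hj hk hij hjk hik.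
    have hi : (1 <= i <= n.+1)%N by apply/andP; split; lia.
    rewrite step //.
    have -> : rot n i = 1%N by rewrite /rot (_ : i == n.+1) //; apply/eqP; lia.
    apply: B; try exact: rot_range; try exact: rot_neq.
    - have := rot_neq hi hj hij; rewrite {1}/rot (_ : i == n.+1) //; apply/eqP; lia.
    - have := rot_neq hi hk hik; rewrite {1}/rot (_ : i == n.+1) //; apply/eqP; lia.
  have hi : (1 <= i <= n.+1)%N by apply/andP; split; lia.
  rewrite step //.
  apply: IH; try exact: rot_range; try exact: rot_neq.
  - by rewrite /rot ifN; [lia | apply/eqP; lia].
  - by rewrite /rot ifN; [lia | apply/eqP; lia].
move=> i j k hi hj hk hij hjk hik.
case: (i =P 1%N) => [ei|ei].
  by subst i; apply: B.
apply: (M (n.+1 - i)%N) => //; lia.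
Qed.
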